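(* There is an absolute constant $C>0$ such that for every $h\in\mathbb N$ and every $P\in\mathcal C(h)$ all of whose holes are axis-aligned rectangles, $\varrho(P)\le C$.
   Context: For $h\in\mathbb N$, $\mathcal C(h)$ denotes the family of polygonal domains $P=P_0\setminus\bigcup_{i=1}^h \operatorname{int}(P_i)$, where $P_0$ is a convex polygon in the plane and $P_1,\dots,P_h$ (the holes) are pairwise disjoint convex polygons contained in the interior of $P_0$. For $s,t\in P$, ${\rm geod}(s,t)$ is the infimum of the Euclidean lengths of polygonal paths from $s$ to $t$ contained in $P$; ${\rm diam}_2(P)=\sup_{s,t\in P}|st|$, ${\rm diam}_g(P)=\sup_{s,t\in P}{\rm geod}(s,t)$, and $\varrho(P)={\rm diam}_g(P)/{\rm diam}_2(P)$. *)

(* Defs.v *)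
From Stdlib Require Import Reals List.
From Coquelicot Require Import Coquelicot.
Import ListNotations.
Open Scope R_scope.

Definition pt : Type := (R * R)%type.

Definition dist (p q : pt) : R :=
  sqrt ((fst p - fst q) ^ 2 + (snd p - snd q) ^ 2).

Definition pinterior (S : pt -> Prop) (p : pt) : Prop :=
  exists r, 0 < r /\ forall q, dist p q < r -> S q.

Fixpoint comb (w : list R) (V : list pt) : pt :=
  match w, V with
  | a :: w', v :: V' => let c := comb w' V' in
      (a * fst v + fst c, a * snd v + snd c)
  | _, _ => (0, 0)
  end.

Definition in_hull (V : list pt) (p : pt) : Prop :=
  exists w : list R, length w = length V /\ List.Forall (fun a => 0 <= a) w /\
    fold_right Rplus 0 w = 1 /\ p = comb w V.

(* A convex polygon: the convex hull of finitely many points, with nonempty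
   interior (a genuine 2-dimensional polygon). *)
Definition convex_polygon (V : list pt) : Prop :=
  exists p, pinterior (in_hull V) p.

Record rect : Type := Rect { rx1 : R; rx2 : R; ry1 : R; ry2 : R }.

Definition rect_ok (Q : rect) : Prop := rx1 Q < rx2 Q /\ ry1 Q < ry2 Q.

Definition in_rect (Q : rect) (p : pt) : Prop :=
  rx1 Q <= fst p <= rx2 Q /\ ry1 Q <= snd p <= ry2 Q.

Definition in_rect_int (Q : rect) (p : pt) : Prop :=
  rx1 Q < fst p < rx2 Q /\ ry1 Q < snd p < ry2 Q.

(* The family C(h) restricted to axis-aligned rectangular holes:
   P_0 = hull V convex polygon, holes Q_0..Q_{h-1} pairwise disjoint
   rectangles contained in the interior of P_0. *)
Definition valid_domain (V : list pt) (h : nat) (Q : nat -> rect) : Prop :=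
  convex_polygon V /\
  (forall i, (i < h)%nat -> rect_ok (Q i)) /\
  (forall i, (i < h)%nat -> forall p, in_rect (Q i) p -> pinterior (in_hull V) p) /\
  (forall i j, (i < h)%nat -> (j < h)%nat -> i <> j ->
     forall p, ~ (in_rect (Q i) p /\ in_rect (Q j) p)).

Definition pdomain (V : list pt) (h : nat) (Q : nat -> rect) (p : pt) : Prop :=
  in_hull V p /\ forall i, (i < h)%nat -> ~ in_rect_int (Q i) p.

Definition seg_in (S : pt -> Prop) (p q : pt) : Prop :=
  forall l, 0 <= l <= 1 ->
    S (fst p + l * (fst q - fst p), snd p + l * (snd q - snd p)).

Fixpoint chain_in (S : pt -> Prop) (p : pt) (l : list pt) (t : pt) : Prop :=
  match l with
  | [] => seg_in S p t
  | q :: l' => seg_in S p q /\ chain_in S q l' t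
  end.

Fixpoint chain_len (p : pt) (l : list pt) (t : pt) : R :=
  match l with
  | [] => dist p t
  | q :: l' => dist p q + chain_len q l' t
  end.

Definition geod (S : pt -> Prop) (s t : pt) : Rbar :=
  Glb_Rbar (fun L => exists l, chain_in S s l t /\ L = chain_len s l t).

Definition diam_2 (S : pt -> Prop) : Rbar :=
  Lub_Rbar (fun L => exists s t, S s /\ S t /\ L = dist s t).

Definition diam_g (S : pt -> Prop) : Rbar :=
  Rbar_lub (fun L => exists s t, S s /\ S t /\ L = geod S s t).

Definition rho (S : pt -> Prop) : Rbar := Rbar_div (diam_g S) (diam_2 S).

(* Main.v *)
Require Import Defs.
From Stdlib Require Import Reals List Lra Lia Psatz Classical.
From Coquelicot Require Import Coquelicot.
Import ListNotations.
Import Defs.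
Open Scope R_scope.

Lemma dist_le (p q : pt) : dist p q <= Rabs (fst p - fst q) + Rabs (snd p - snd q).
Proof.
  unfold dist.
  pose proof (Rabs_pos (fst p - fst q)); pose proof (Rabs_pos (snd p - snd q)).
  rewrite <- (sqrt_Rsqr (Rabs _ + Rabs _)) by lra.
  apply sqrt_le_1_alt. unfold Rsqr.
  rewrite <- (pow2_abs (fst p - fst q)), <- (pow2_abs (snd p - snd q)). nra.
Qed.

Lemma dist_ge_x (p q : pt) : Rabs (fst p - fst q) <= dist p q.
Proof.
  unfold dist. rewrite <- sqrt_Rsqr_abs. apply sqrt_le_1_alt. unfold Rsqr.
  pose proof (pow2_ge_0 (snd p - snd q)). nra.
Qed.

Lemma dist_ge_y (p q : pt) : Rabs (snd p - snd q) <= dist p q.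
Proof.
  unfold dist. rewrite <- sqrt_Rsqr_abs. apply sqrt_le_1_alt. unfold Rsqr.
  pose proof (pow2_ge_0 (fst p - fst q)). nra.
Qed.

Lemma dist_sym (p q : pt) : dist p q = dist q p.
Proof. unfold dist. f_equal. ring. Qed.

Lemma dist_pos (p q : pt) : 0 <= dist p q.
Proof. unfold dist. apply sqrt_pos. Qed.

Lemma comb_lin (a b c : R) (V : list pt) : forall w,
  length w = length V ->
  List.Forall (fun v => a * fst v + b * snd v <= c) V -> List.Forall (fun x => 0 <= x) w ->
  a * fst (comb w V) + b * snd (comb w V) <= c * fold_right Rplus 0 w.
Proof.
  induction V as [|v V IH]; intros w Hl HV Hw.
  - destruct w; simpl in *; [lra | discriminate].
  - destruct w as [|a0 w]; simpl in *; [discriminate|].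
    apply Forall_cons_iff in HV as [HV1 HV2]. apply Forall_cons_iff in Hw as [Hw1 Hw2].
    assert (Hl' : length w = length V) by lia.
    specialize (IH w Hl' HV2 Hw2).
    assert (a0 * (a * fst v + b * snd v) <= a0 * c) by (apply Rmult_le_compat_l; auto).
    nra.
Qed.

Lemma hull_lin (a b c : R) (V : list pt) (p : pt) :
  (forall v, In v V -> a * fst v + b * snd v <= c) -> in_hull V p ->
  a * fst p + b * snd p <= c.
Proof.
  intros HV [w [Hl [Hw [Hs Hp]]]]. subst p.
  pose proof (comb_lin a b c V w Hl) as H.
  rewrite Hs, Rmult_1_r in H. apply H; auto.
  apply Forall_forall; auto.
Qed.

Fixpoint mix (l : R) (w w' : list R) : list R :=
  match w, w' with a :: w1, b :: w2 => ((1-l)*a + l*b) :: mix l w1 w2 | _, _ => [] end.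

Lemma comb_mix l (V : list pt) : forall w w', length w = length V -> length w' = length V ->
  fst (comb (mix l w w') V) = (1-l)*fst (comb w V) + l * fst (comb w' V) /\
  snd (comb (mix l w w') V) = (1-l)*snd (comb w V) + l * snd (comb w' V) /\
  length (mix l w w') = length V /\
  fold_right Rplus 0 (mix l w w') = (1-l)*fold_right Rplus 0 w + l*fold_right Rplus 0 w'.
Proof.
  induction V as [|v V IH]; intros w w' H1 H2.
  - destruct w, w'; simpl in *; try discriminate. repeat split; ring.
  - destruct w as [|a w]; destruct w' as [|b w']; simpl in *; try discriminate.
    destruct (IH w w' ltac:(lia) ltac:(lia)) as [E1 [E2 [E3 E4]]].
    repeat split.
    + rewrite E1; ring.
    + rewrite E2; ring.
    + rewrite E3; reflexivity.
    + rewrite E4; ring.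
Qed.

Lemma mix_nonneg l (Hl : 0 <= l <= 1) : forall w w', List.Forall (fun x => 0 <= x) w ->
  List.Forall (fun x => 0 <= x) w' -> List.Forall (fun x => 0 <= x) (mix l w w').
Proof.
  induction w as [|a w IH]; intros w' H1 H2; destruct w' as [|b w']; simpl; auto.
  inversion H1; inversion H2; subst. constructor; [nra | auto].
Qed.

Lemma hull_convex (V : list pt) p q l : in_hull V p -> in_hull V q -> 0 <= l <= 1 ->
  in_hull V (fst p + l * (fst q - fst p), snd p + l * (snd q - snd p)).
Proof.
  intros [w [Hl [Hw [Hs Hp]]]] [w' [Hl' [Hw' [Hs' Hq]]]] Hl0.
  exists (mix l w w').
  destruct (comb_mix l V w w' Hl Hl') as [E1 [E2 [E3 E4]]].
  split; [exact E3|]. split; [apply mix_nonneg; auto|]. split; [rewrite E4, Hs, Hs'; ring|].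
  subst p q. apply injective_projections; simpl; [rewrite E1 | rewrite E2]; ring.
Qed.

Lemma comb_zero (V : list pt) : forall n, comb (repeat 0 n) V = (0, 0).
Proof.
  induction V as [|v V IH]; intros n; destruct n; simpl; auto.
  rewrite IH. simpl. f_equal; ring.
Qed.

Lemma in_V_hull (V : list pt) v : In v V -> in_hull V v.
Proof.
  induction V as [|u V IH]; intros H; [destruct H|].
  destruct H as [H|H].
  - subst u. exists (1 :: repeat 0 (length V)). simpl. rewrite repeat_length.
    split; [auto|]. split.
    + constructor; [lra|]. apply Forall_forall. intros x Hx. apply repeat_spec in Hx. lra.
    + split.
      * assert (forall n, fold_right Rplus 0 (repeat 0 n) = 0) as Hr.
        { induction n; simpl; auto. rewrite IHn; ring. }
        rewrite Hr. ring.
      * rewrite comb_zero. apply injective_projections; simpl; ring.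
  - destruct (IH H) as [w [Hl [Hw [Hs Hp]]]].
    exists (0 :: w). simpl. split; [auto|]. split; [constructor; [lra|auto]|].
    split; [rewrite Hs; ring|]. rewrite <- Hp. apply injective_projections; simpl; ring.
Qed.

Lemma seg_rev (S : pt -> Prop) p q : seg_in S p q -> seg_in S q p.
Proof.
  intros H l Hl. specialize (H (1 - l) ltac:(lra)).
  replace (fst q + l * (fst p - fst q)) with (fst p + (1 - l) * (fst q - fst p)) by ring.
  replace (snd q + l * (snd p - snd q)) with (snd p + (1 - l) * (snd q - snd p)) by ring.
  exact H.
Qed.

Lemma chain_app (S : pt -> Prop) p l1 q l2 r : chain_in S p l1 q -> chain_in S q l2 r ->
  chain_in S p (l1 ++ q :: l2) r /\
  chain_len p (l1 ++ q :: l2) r = chain_len p l1 q + chain_len q l2 r.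
Proof.
  revert p. induction l1 as [|a l1 IH]; intros p H1 H2; simpl in *.
  - split; auto.
  - destruct H1 as [H1a H1b]. destruct (IH a H1b H2) as [E1 E2].
    split; auto. rewrite E2. ring.
Qed.

Lemma chain_rev (S : pt -> Prop) p l q : chain_in S p l q ->
  exists l', chain_in S q l' p /\ chain_len q l' p = chain_len p l q.
Proof.
  revert p. induction l as [|a l IH]; intros p H; simpl in *.
  - exists []. simpl. split; [apply seg_rev; auto | apply dist_sym].
  - destruct H as [Ha Hb]. destruct (IH a Hb) as [l' [H1 H2]].
    assert (H3 : chain_in S a [] p) by (simpl; apply seg_rev; auto).
    destruct (chain_app S q l' a [] p H1 H3) as [E1 E2].
    exists (l' ++ a :: []). split; auto. rewrite E2, H2. simpl. rewrite (dist_sym a p). ring.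
Qed.

Lemma list_max {A : Type} (f : A -> R) (l : list A) : l <> [] ->
  exists a, In a l /\ forall b, In b l -> f b <= f a.
Proof.
  induction l as [|x l IH]; intros H; [congruence|].
  destruct l as [|y l'].
  - exists x. split; [left; auto|]. intros b [Hb|[]]; subst; lra.
  - destruct (IH ltac:(congruence)) as [a [Ha Hb]].
    destruct (Rle_dec (f x) (f a)).
    + exists a. split; [right; auto|]. intros b [Hb'|Hb']; [subst; auto | auto].
    + exists x. split; [left; auto|]. intros b [Hb'|Hb']; [subst; lra|].
      specialize (Hb b Hb'). lra.
Qed.

Lemma filter_le {A : Type} (f g : A -> bool) (l : list A) :
  (forall i, In i l -> f i = true -> g i = true) ->
  (length (filter f l) <= length (filter g l))%nat.
Proof.
  induction l as [|x l IH]; intros H; simpl; [lia|].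
  assert (IH' := IH (fun i Hi => H i (or_intror Hi))).
  destruct (f x) eqn:E1.
  - rewrite (H x (or_introl eq_refl) E1). simpl. lia.
  - destruct (g x); simpl; lia.
Qed.

Lemma filter_lt {A : Type} (f g : A -> bool) (l : list A) :
  (forall i, In i l -> f i = true -> g i = true) ->
  (exists k, In k l /\ g k = true /\ f k = false) ->
  (length (filter f l) < length (filter g l))%nat.
Proof.
  induction l as [|x l IH]; intros H [k [Hk [Hg Hf]]]; [destruct Hk|].
  simpl. destruct Hk as [Hk|Hk].
  - subst x. rewrite Hg, Hf. simpl.
    pose proof (filter_le f g l (fun i Hi => H i (or_intror Hi))). lia.
  - assert (IH' := IH (fun i Hi => H i (or_intror Hi)) (ex_intro _ k (conj Hk (conj Hg Hf)))).
    destruct (f x) eqn:E1.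
    + rewrite (H x (or_introl eq_refl) E1). simpl. lia.
    + destruct (g x); simpl; lia.
Qed.

Lemma pint_shift (S : pt -> Prop) z : pinterior S z -> exists e, 0 < e /\
  S (fst z + e, snd z) /\ S (fst z - e, snd z) /\ S (fst z, snd z + e) /\ S (fst z, snd z - e).
Proof.
  intros [r [Hr H]]. exists (r/2). split; [lra|].
  repeat split; apply H; eapply Rle_lt_trans; try apply dist_le; simpl.
  - assert (Rabs (fst z - (fst z + r / 2)) <= r/2) by (apply Rabs_le; lra).
    assert (Rabs (snd z - snd z) <= 0) by (apply Rabs_le; lra). lra.
  - assert (Rabs (fst z - (fst z - r / 2)) <= r/2) by (apply Rabs_le; lra).
    assert (Rabs (snd z - snd z) <= 0) by (apply Rabs_le; lra). lra.
  - assert (Rabs (snd z - (snd z + r / 2)) <= r/2) by (apply Rabs_le; lra).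
    assert (Rabs (fst z - fst z) <= 0) by (apply Rabs_le; lra). lra.
  - assert (Rabs (snd z - (snd z - r / 2)) <= r/2) by (apply Rabs_le; lra).
    assert (Rabs (fst z - fst z) <= 0) by (apply Rabs_le; lra). lra.
Qed.

Definition supported (V : list pt) (b : pt) (m : R) :=
  forall q, In q V -> snd q - snd b <= m * (fst q - fst b).
Definition right_of (u q : pt) : bool := if Rlt_dec (fst u) (fst q) then true else false.

Lemma dist_refl p : dist p p = 0.
Proof. unfold dist. replace ((fst p - fst p) ^ 2 + (snd p - snd p) ^ 2) with 0 by ring.
  apply sqrt_0. Qed.

Lemma supp_hull V b m z : supported V b m -> in_hull V z -> snd z - snd b <= m*(fst z - fst b).
Proof.
  intros Hs Hz.
  assert (H := hull_lin (-m) 1 (snd b - m * fst b) V z).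
  assert (H' : (-m) * fst z + 1 * snd z <= snd b - m * fst b).
  { apply H; auto. intros v Hv. specialize (Hs v Hv). lra. }
  lra.
Qed.

Lemma supp_noint V b m z : supported V b m -> snd z - snd b = m*(fst z - fst b) ->
  ~ pinterior (in_hull V) z.
Proof.
  intros Hs Hz Hp. destruct (pint_shift _ _ Hp) as [e [He [_ [_ [H3 _]]]]].
  pose proof (supp_hull V b m _ Hs H3). simpl in H. lra.
Qed.

Lemma supp_move V u s b : supported V u s -> snd b - snd u = s*(fst b - fst u) -> supported V b s.
Proof. intros H E q Hq. specialize (H q Hq). lra. Qed.

Lemma gift_step V u m : in_hull V u -> supported V u m -> (exists v, In v V /\ fst u < fst v) ->
 exists w s, In w V /\ fst u < fst w /\ s <= m /\ snd w - snd u = s*(fst w - fst u) /\ supported V u s.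
Proof.
  intros Hu Hs [v [Hv Hlt]].
  set (L := filter (right_of u) V).
  assert (HL : L <> []).
  { intro E. assert (In v L). { apply filter_In. split; auto. unfold right_of.
      destruct (Rlt_dec _ _); auto; lra. } rewrite E in H; destruct H. }
  destruct (list_max (fun q => (snd q - snd u) / (fst q - fst u)) L HL) as [w [Hw Hmax]].
  apply filter_In in Hw as [Hw Hrw]. unfold right_of in Hrw.
  destruct (Rlt_dec (fst u) (fst w)) as [Hwu|]; [|discriminate].
  set (s := (snd w - snd u) / (fst w - fst u)).
  exists w, s. split; auto. split; auto.
  assert (Es : snd w - snd u = s * (fst w - fst u)) by (unfold s; field; lra).
  split.
  - specialize (Hs w Hw). unfold s. apply Rmult_le_reg_r with (fst w - fst u); [lra|].
    replace ((snd w - snd u) / (fst w - fst u) * (fst w - fst u)) with (snd w - snd u) by (field; lra).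
    lra.
  - split; auto. intros q Hq.
    destruct (Rlt_dec (fst u) (fst q)) as [Hqu|Hqu].
    + assert (Hq' : In q L) by (apply filter_In; split; auto; unfold right_of; destruct (Rlt_dec _ _); auto; lra).
      specialize (Hmax q Hq'). simpl in Hmax. fold s in Hmax.
      replace (snd q - snd u) with ((snd q - snd u) / (fst q - fst u) * (fst q - fst u)) by (field; lra).
      apply Rmult_le_compat_r; lra.
    + assert (Hsm : s <= m).
      { specialize (Hs w Hw). unfold s. apply Rmult_le_reg_r with (fst w - fst u); [lra|].
        replace ((snd w - snd u) / (fst w - fst u) * (fst w - fst u)) with (snd w - snd u) by (field; lra).
        lra. }
      specialize (Hs q Hq). nra.
Qed.

Lemma top_at V : forall n u m, (length (filter (right_of u) V) <= n)%nat -> in_hull V u ->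
  supported V u m -> forall x0, fst u <= x0 -> (exists v, In v V /\ x0 <= fst v) ->
  exists b m', fst b = x0 /\ in_hull V b /\ supported V b m'.
Proof.
  induction n as [|n IH]; intros u m Hn Hu Hs x0 Hx0 [v [Hv Hxv]].
  - destruct (Req_dec x0 (fst u)) as [E|E].
    + exists u, m. split; [lra|split; auto].
    + exfalso. assert (In v (filter (right_of u) V)).
      { apply filter_In. split; auto. unfold right_of. destruct (Rlt_dec _ _); auto; lra. }
      destruct (filter (right_of u) V); [destruct H | simpl in Hn; lia].
  - destruct (Req_dec x0 (fst u)) as [E|E].
    + exists u, m. split; [lra|split; auto].
    + assert (Hvu : fst u < fst v) by lra.
      destruct (gift_step V u m Hu Hs (ex_intro _ v (conj Hv Hvu))) as [w [s [Hw [Hwu [Hsm [Es Hss]]]]]].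
      destruct (Rle_dec x0 (fst w)) as [Hle|Hgt].
      * set (l := (x0 - fst u) / (fst w - fst u)).
        exists (x0, snd u + s * (x0 - fst u)), s.
        split; [reflexivity|]. split.
        -- assert (Hl : 0 <= l <= 1).
           { unfold l. split.
             - apply Rdiv_le_0_compat; lra.
             - apply Rmult_le_reg_r with (fst w - fst u); [lra|].
               replace ((x0 - fst u) / (fst w - fst u) * (fst w - fst u)) with (x0 - fst u) by (field; lra).
               lra. }
           pose proof (hull_convex V u w l Hu (in_V_hull V w Hw) Hl) as Hc.
           replace (x0, snd u + s * (x0 - fst u)) with
             (fst u + l * (fst w - fst u), snd u + l * (snd w - snd u)); auto.
           rewrite Es. unfold l. apply injective_projections; simpl; field; lra.
        -- apply supp_move with u; auto. simpl. ring.
      * assert (Hsw : supported V w s) by (apply supp_move with u; auto).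
        apply (IH w s); auto.
        -- assert (length (filter (right_of w) V) < length (filter (right_of u) V))%nat; [|lia].
           apply filter_lt.
           ++ intros i _. unfold right_of. destruct (Rlt_dec (fst w) (fst i)); [|discriminate].
              destruct (Rlt_dec (fst u) (fst i)); auto; lra.
           ++ exists w. split; auto. unfold right_of.
              destruct (Rlt_dec (fst u) (fst w)); [|lra]. destruct (Rlt_dec (fst w) (fst w)); [lra|]. auto.
        -- apply in_V_hull; auto.
        -- lra.
        -- exists v; auto.
Qed.

Lemma pint_in (S : pt -> Prop) z : pinterior S z -> S z.
Proof. intros [r [Hr H]]. apply H. rewrite dist_refl. auto. Qed.

Lemma rect_pint V h Q i z : valid_domain V h Q -> (i < h)%nat -> in_rect (Q i) z ->
  pinterior (in_hull V) z.
Proof. intros [_ [_ [Hin _]]] Hi Hz. apply (Hin i Hi z Hz). Qed.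

Lemma int_rect Q z : in_rect_int Q z -> in_rect Q z.
Proof. unfold in_rect_int, in_rect. intros; lra. Qed.

Lemma seg_P V h Q a b : in_hull V a -> in_hull V b ->
  (forall l, 0 <= l <= 1 -> forall i, (i < h)%nat ->
     ~ in_rect_int (Q i) (fst a + l*(fst b - fst a), snd a + l*(snd b - snd a))) ->
  seg_in (pdomain V h Q) a b.
Proof. intros Ha Hb H l Hl. split; [apply hull_convex; auto | intros i Hi; apply H; auto]. Qed.

Lemma chain_end V h Q Ymax : valid_domain V h Q -> (forall v, In v V -> snd v <= Ymax) ->
  forall n b m, (length (filter (right_of b) V) <= n)%nat -> in_hull V b -> supported V b m ->
  exists l e, chain_in (pdomain V h Q) b l e /\ in_hull V e /\ (forall v, In v V -> fst v <= fst e) /\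
   (m <= 0 -> chain_len b l e <= (fst e - fst b) + (snd b - snd e)) /\
   chain_len b l e <= (fst e - fst b) + (2*Ymax - snd b - snd e).
Proof.
  intros Hv HY.
  assert (HYh : forall z, in_hull V z -> snd z <= Ymax).
  { intros z Hz. pose proof (hull_lin 0 1 Ymax V z) as H. 
    assert (0 * fst z + 1 * snd z <= Ymax); [apply H; auto; intros v Hv'; specialize (HY v Hv'); lra | lra]. }
  assert (Hseg : forall b s w, in_hull V b -> in_hull V w -> supported V b s ->
     snd w - snd b = s * (fst w - fst b) -> seg_in (pdomain V h Q) b w).
  { intros b s w Hb Hw Hs E. apply seg_P; auto. intros l Hl i Hi Hint.
    apply (supp_noint V b s (fst b + l * (fst w - fst b), snd b + l * (snd w - snd b)) Hs).
    - simpl. replace (snd b + l * (snd w - snd b) - snd b) with (l * (snd w - snd b)) by ring.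
      rewrite E. ring.
    - apply (rect_pint V h Q i); auto. apply int_rect; auto. }
  induction n as [|n IH]; intros b m Hn Hb Hs.
  - exists [], b. simpl. split.
    + apply (Hseg b m b); auto. ring.
    + split; auto. split.
      * intros v Hv'. destruct (Rlt_dec (fst b) (fst v)); [|lra].
        exfalso. assert (In v (filter (right_of b) V)).
        { apply filter_In. split; auto. unfold right_of. destruct (Rlt_dec _ _); auto; lra. }
        destruct (filter (right_of b) V); [destruct H | simpl in Hn; lia].
      * rewrite dist_refl. specialize (HYh b Hb). split; [intros; lra | lra].
  - destruct (classic (exists v, In v V /\ fst b < fst v)) as [Hex|Hnex].
    + destruct (gift_step V b m Hb Hs Hex) as [w [s [Hw [Hwb [Hsm [Es Hss]]]]]].
      assert (Hwh : in_hull V w) by (apply in_V_hull; auto).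
      assert (Hsw : supported V w s) by (apply supp_move with b; auto).
      assert (Hcnt : (length (filter (right_of w) V) <= n)%nat).
      { assert (length (filter (right_of w) V) < length (filter (right_of b) V))%nat; [|lia].
        apply filter_lt.
        ++ intros i _. unfold right_of. destruct (Rlt_dec (fst w) (fst i)); [|discriminate].
           destruct (Rlt_dec (fst b) (fst i)); auto; lra.
        ++ exists w. split; auto. unfold right_of.
           destruct (Rlt_dec (fst b) (fst w)); [|lra]. destruct (Rlt_dec (fst w) (fst w)); [lra|]. auto. }
      destruct (IH w s Hcnt Hwh Hsw) as [l [e [Hc [He [Hmax [B1 B2]]]]]].
      exists (w :: l), e. simpl. split; [split; auto; apply (Hseg b s w); auto|].
      split; auto. split; auto.
      pose proof (dist_le b w) as Hd.
      assert (Ax : Rabs (fst b - fst w) = fst w - fst b) by (rewrite Rabs_minus_sym; apply Rabs_right; lra).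
      rewrite Ax in Hd.
      pose proof (HYh b Hb).
      destruct (Rle_dec s 0) as [Hs0|Hs0].
      * assert (Hy : snd w <= snd b) by nra.
        assert (Ay : Rabs (snd b - snd w) = snd b - snd w) by (apply Rabs_right; lra).
        rewrite Ay in Hd. specialize (B1 Hs0). split; [intros; lra | lra].
      * assert (Hy : snd b <= snd w) by nra.
        assert (Ay : Rabs (snd b - snd w) = snd w - snd b) by (rewrite Rabs_minus_sym; apply Rabs_right; lra).
        rewrite Ay in Hd. split; [intros; lra | lra].
    + exists [], b. simpl. split.
      * apply (Hseg b m b); auto. ring.
      * split; auto. split.
        -- intros v Hv'. destruct (Rlt_dec (fst b) (fst v)); [|lra].
           exfalso; apply Hnex; exists v; auto.
        -- rewrite dist_refl. specialize (HYh b Hb). split; [intros; lra | lra].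
Qed.

Definition bl (Q : nat -> rect) (p : pt) (i : nat) : bool :=
  if Rlt_dec (rx1 (Q i)) (fst p) then if Rlt_dec (fst p) (rx2 (Q i)) then
  if Rle_dec (snd p) (ry1 (Q i)) then true else false else false else false.
Definition above (Q : nat -> rect) (y : R) (i : nat) : bool :=
  if Rle_dec y (ry1 (Q i)) then true else false.

Lemma bl_iff Q p i : bl Q p i = true <-> (rx1 (Q i) < fst p < rx2 (Q i) /\ snd p <= ry1 (Q i)).
Proof.
  unfold bl. destruct (Rlt_dec (rx1 (Q i)) (fst p)); destruct (Rlt_dec (fst p) (rx2 (Q i)));
  destruct (Rle_dec (snd p) (ry1 (Q i)));
  split; intros; try lra; try discriminate; auto.
Qed.

Lemma above_iff Q y i : above Q y i = true <-> y <= ry1 (Q i).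
Proof. unfold above. destruct (Rle_dec y (ry1 (Q i))); split; intros; try lra; try discriminate; auto. Qed.

Lemma dist_bound p q a b : Rabs (fst p - fst q) <= a -> Rabs (snd p - snd q) <= b -> dist p q <= a + b.
Proof. intros. pose proof (dist_le p q). lra. Qed.

Lemma stair_step V h Q p k : valid_domain V h Q -> pdomain V h Q p -> (k < h)%nat ->
  rx1 (Q k) < fst p < rx2 (Q k) -> snd p <= ry1 (Q k) ->
  (forall j, (j < h)%nat -> rx1 (Q j) < fst p < rx2 (Q j) -> snd p <= ry1 (Q j) -> ry1 (Q k) <= ry1 (Q j)) ->
  exists l d, chain_in (pdomain V h Q) p l d /\ pdomain V h Q d /\
    chain_len p l d <= (fst d - fst p) + (snd d - snd p) /\
    (length (filter (above Q (snd d)) (seq 0 h)) < length (filter (above Q (snd p)) (seq 0 h)))%nat.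
Proof.
  intros Hv [Hp Hpi] Hk Hx Hy Hmin.
  pose proof Hv as [_ [Hok [_ Hdisj]]].
  destruct (Hok k Hk) as [Hok1 Hok2].
  set (x1 := rx1 (Q k)) in *. set (x2 := rx2 (Q k)) in *.
  set (y1 := ry1 (Q k)) in *. set (y2 := ry2 (Q k)) in *.
  set (a := (fst p, y1)). set (c := (x2, y1)). set (d := (x2, y2)).
  assert (Hrh : forall z, in_rect (Q k) z -> in_hull V z).
  { intros z Hz. apply pint_in. apply (rect_pint V h Q k); auto. }
  assert (Ha : in_hull V a) by (apply Hrh; unfold in_rect, a; simpl; fold x1 x2 y1 y2; lra).
  assert (Hc : in_hull V c) by (apply Hrh; unfold in_rect, c; simpl; fold x1 x2 y1 y2; lra).
  assert (Hd : in_hull V d) by (apply Hrh; unfold in_rect, d; simpl; fold x1 x2 y1 y2; lra).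
  assert (Hother : forall z i, (i < h)%nat -> i <> k -> in_rect (Q k) z -> ~ in_rect_int (Q i) z).
  { intros z i Hi Hik Hz Hint. apply (Hdisj k i Hk Hi (not_eq_sym Hik) z). split; auto.
    apply int_rect; auto. }
  exists [a; c], d. simpl. split; [split; [|split]|split].
  - apply seg_P; auto. intros l Hl i Hi Hint. unfold a in Hint. simpl in Hint.
    unfold in_rect_int in Hint.
    replace (fst p + l * (fst p - fst p)) with (fst p) in Hint by ring. simpl in Hint.
    destruct (Rle_dec (snd p) (ry1 (Q i))) as [Hpy|Hpy].
    + assert (Hxi : rx1 (Q i) < fst p < rx2 (Q i)) by lra.
      specialize (Hmin i Hi Hxi Hpy). nra.
    + apply (Hpi i Hi). unfold in_rect_int. nra.
  - apply seg_P; auto. intros l Hl i Hi Hint. unfold a, c in Hint. simpl in Hint.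
    destruct (Nat.eq_dec i k) as [->|Hik].
    + unfold in_rect_int in Hint. simpl in Hint. fold x1 x2 y1 y2 in Hint. nra.
    + refine (Hother _ i Hi Hik _ Hint). unfold in_rect; simpl. fold x1 x2 y1 y2. nra.
  - apply seg_P; auto. intros l Hl i Hi Hint. unfold c, d in Hint. simpl in Hint.
    destruct (Nat.eq_dec i k) as [->|Hik].
    + unfold in_rect_int in Hint. simpl in Hint. fold x1 x2 y1 y2 in Hint. nra.
    + refine (Hother _ i Hi Hik _ Hint). unfold in_rect; simpl. fold x1 x2 y1 y2. nra.
  - split; auto. intros i Hi Hint.
    destruct (Nat.eq_dec i k) as [->|Hik].
    + unfold in_rect_int, d in Hint. simpl in Hint. fold y2 in Hint. lra.
    + refine (Hother _ i Hi Hik _ Hint). unfold in_rect, d; simpl. fold x1 x2 y1 y2. lra.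
  - split.
    + assert (D1 : dist p a <= 0 + (y1 - snd p)).
      { apply dist_bound; unfold a; simpl; apply Rabs_le; lra. }
      assert (D2 : dist a c <= (x2 - fst p) + 0).
      { apply dist_bound; unfold a, c; simpl; apply Rabs_le; lra. }
      assert (D3 : dist c d <= 0 + (y2 - y1)).
      { apply dist_bound; unfold c, d; simpl; apply Rabs_le; lra. }
      lra.
    + apply filter_lt.
      * intros i _ H. apply above_iff in H. apply above_iff. lra.
      * exists k. split; [apply in_seq; lia|]. split; [apply above_iff; auto|].
        destruct (above Q y2 k) eqn:E; auto. apply above_iff in E. fold y1 in E. lra.
Qed.

Lemma seg_refl (S : pt -> Prop) p : S p -> seg_in S p p.
Proof.
  intros H l Hl.
  replace (fst p + l * (fst p - fst p), snd p + l * (snd p - snd p)) with p; auto.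
  apply injective_projections; simpl; ring.
Qed.

Lemma stair V h Q : valid_domain V h Q -> forall n p,
  (length (filter (above Q (snd p)) (seq 0 h)) <= n)%nat -> pdomain V h Q p ->
  exists l q, chain_in (pdomain V h Q) p l q /\ pdomain V h Q q /\
    chain_len p l q <= (fst q - fst p) + (snd q - snd p) /\
    (forall i, (i < h)%nat -> ~ (rx1 (Q i) < fst q < rx2 (Q i) /\ snd q <= ry1 (Q i))).
Proof.
  intros Hv. induction n as [|n IH]; intros p Hn Hp;
  (destruct (filter (bl Q p) (seq 0 h)) as [|k0 L] eqn:Ef;
  [ exists [], p; simpl; split; [apply seg_refl; auto|]; split; auto;
    rewrite dist_refl; split; [lra|];
    intros i Hi Hb; apply bl_iff in Hb;
    assert (Hin : In i (filter (bl Q p) (seq 0 h))) by (apply filter_In; split; [apply in_seq; lia | auto]);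
    rewrite Ef in Hin; destruct Hin
  | ]).
  - destruct (list_max (fun i => - ry1 (Q i)) (k0 :: L) ltac:(congruence)) as [k [Hk Hmax]].
    rewrite <- Ef in Hk. apply filter_In in Hk as [Hk1 Hk2]. apply in_seq in Hk1.
    apply bl_iff in Hk2.
    assert (Hmin : forall j, (j < h)%nat -> rx1 (Q j) < fst p < rx2 (Q j) -> snd p <= ry1 (Q j) -> ry1 (Q k) <= ry1 (Q j)).
    { intros j Hj Hx Hy. assert (In j (k0 :: L)).
      { rewrite <- Ef. apply filter_In. split; [apply in_seq; lia | apply bl_iff; auto]. }
      specialize (Hmax j H). simpl in Hmax. lra. }
    destruct (stair_step V h Q p k Hv Hp ltac:(lia) (proj1 Hk2) (proj2 Hk2) Hmin) as [l [d [_ [_ [_ Hc]]]]].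
    lia.
  - destruct (list_max (fun i => - ry1 (Q i)) (k0 :: L) ltac:(congruence)) as [k [Hk Hmax]].
    rewrite <- Ef in Hk. apply filter_In in Hk as [Hk1 Hk2]. apply in_seq in Hk1.
    apply bl_iff in Hk2.
    assert (Hmin : forall j, (j < h)%nat -> rx1 (Q j) < fst p < rx2 (Q j) -> snd p <= ry1 (Q j) -> ry1 (Q k) <= ry1 (Q j)).
    { intros j Hj Hx Hy. assert (In j (k0 :: L)).
      { rewrite <- Ef. apply filter_In. split; [apply in_seq; lia | apply bl_iff; auto]. }
      specialize (Hmax j H). simpl in Hmax. lra. }
    destruct (stair_step V h Q p k Hv Hp ltac:(lia) (proj1 Hk2) (proj2 Hk2) Hmin) as [l [d [Hc1 [Hd [Hlen Hc]]]]].
    destruct (IH d ltac:(lia) Hd) as [l' [q [Hc' [Hq [Hlen' Hnb]]]]].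
    destruct (chain_app _ p l d l' q Hc1 Hc') as [E1 E2].
    exists (l ++ d :: l'), q. split; auto. split; auto. split; auto. rewrite E2. lra.
Qed.

Lemma to_end V h Q Xmin Xmax Ymin Ymax W m0 : valid_domain V h Q ->
  (forall z, in_hull V z -> Xmin <= fst z <= Xmax /\ Ymin <= snd z <= Ymax) ->
  (forall v, In v V -> snd v <= Ymax) ->
  (exists v, In v V /\ fst v = Xmax) -> in_hull V W -> fst W = Xmin -> supported V W m0 ->
  forall s, pdomain V h Q s -> exists l e, chain_in (pdomain V h Q) s l e /\ in_hull V e /\
    fst e = Xmax /\ chain_len s l e <= (Xmax - Xmin) + 2 * (Ymax - Ymin).
Proof.
  intros Hv Hbox HY [vr [Hvr Evr]] HW EW HsW s Hs.
  destruct (stair V h Q Hv _ s (le_n _) Hs) as [l1 [q [C1 [Hq [L1 Hnb]]]]].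
  pose proof Hq as [Hqh Hqi].
  destruct (top_at V _ W m0 (le_n _) HW HsW (fst q)) as [b [m [Eb [Hb Hsb]]]].
  { rewrite EW. apply Hbox; auto. }
  { exists vr. split; auto. rewrite Evr. apply Hbox; auto. }
  assert (Hqb : snd q <= snd b).
  { pose proof (supp_hull V b m q Hsb Hqh). rewrite Eb in H. lra. }
  assert (C2 : chain_in (pdomain V h Q) q [] b).
  { simpl. apply seg_P; auto. intros l Hl i Hi Hint.
    rewrite Eb in Hint. unfold in_rect_int in Hint. simpl in Hint.
    replace (fst q + l * (fst q - fst q)) with (fst q) in Hint by ring.
    apply (Hqi i Hi). unfold in_rect_int.
    destruct (Rle_dec (snd q) (ry1 (Q i))) as [Hy|Hy].
    - exfalso. apply (Hnb i Hi). lra.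
    - nra. }
  destruct (chain_end V h Q Ymax Hv HY _ b m (le_n _) Hb Hsb) as [l3 [e [C3 [He [Hmx [_ L3]]]]]].
  destruct (chain_app _ q [] b l3 e C2 C3) as [E1 E2].
  destruct (chain_app _ s l1 q _ e C1 E1) as [F1 F2].
  exists (l1 ++ q :: [] ++ b :: l3), e. split; auto. split; auto.
  assert (Hex : fst e = Xmax) by (specialize (Hmx vr Hvr); pose proof (Hbox e He); lra).
  split; auto.
  simpl in F2 |- *. apply Rle_trans with (chain_len s l1 q + (dist q b + chain_len b l3 e)); [right; exact F2|].
  assert (Dqb : dist q b <= 0 + (snd b - snd q)).
  { apply dist_bound; apply Rabs_le; lra. }
  pose proof (Hbox s (proj1 Hs)). pose proof (Hbox e He). pose proof (Hbox b Hb). lra.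
Qed.

Lemma chain_len_nonneg p l q : 0 <= chain_len p l q.
Proof.
  revert p. induction l as [|a l IH]; intros p; simpl; [apply dist_pos|].
  pose proof (dist_pos p a). pose proof (IH a). lra.
Qed.

Lemma geod_le S s t l : chain_in S s l t -> Rbar_le (geod S s t) (chain_len s l t).
Proof.
  intros H. unfold geod. destruct (Glb_Rbar_correct (fun L => exists l, chain_in S s l t /\ L = chain_len s l t)) as [H1 _].
  apply H1. exists l; auto.
Qed.

Lemma geod_ge0 S s t : Rbar_le (Finite 0) (geod S s t).
Proof.
  unfold geod. destruct (Glb_Rbar_correct (fun L => exists l, chain_in S s l t /\ L = chain_len s l t)) as [_ H2].
  apply H2. intros x [l [_ ->]]. simpl. apply chain_len_nonneg.
Qed.

Lemma hull_nonempty V p : in_hull V p -> V <> [].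
Proof. intros [w [Hl [_ [Hs _]]]] ->. destruct w; simpl in *; [lra | discriminate]. Qed.

Lemma left_support V vl : In vl V -> (forall v, In v V -> fst vl <= fst v) ->
  exists W m0, In W V /\ fst W = fst vl /\ supported V W m0.
Proof.
  intros Hvl Ml.
  set (L0 := filter (fun q => if Req_EM_T (fst q) (fst vl) then true else false) V).
  assert (H0 : In vl L0).
  { apply filter_In. split; auto. destruct (Req_EM_T (fst vl) (fst vl)); auto. }
  destruct (list_max snd L0 ltac:(intro E; rewrite E in H0; destruct H0)) as [W [HW MW]].
  pose proof HW as HW'. apply filter_In in HW' as [HWV HWe].
  destruct (Req_EM_T (fst W) (fst vl)) as [EW|]; [|discriminate].
  destruct (classic (exists q, In q V /\ fst vl < fst q)) as [[q0 [Hq0 Hq0l]]|Hno].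
  - set (L1 := filter (right_of W) V).
    assert (H1 : In q0 L1).
    { apply filter_In. split; auto. unfold right_of. destruct (Rlt_dec _ _); auto; lra. }
    destruct (list_max (fun q => (snd q - snd W) / (fst q - fst W)) L1 ltac:(intro E; rewrite E in H1; destruct H1)) as [w [Hw Mw]].
    exists W, ((snd w - snd W) / (fst w - fst W)). split; auto. split; auto.
    intros q Hq. destruct (Req_EM_T (fst q) (fst vl)) as [Eq|Nq].
    + assert (In q L0) by (apply filter_In; split; auto; destruct (Req_EM_T (fst q) (fst vl)); auto; lra).
      specialize (MW q H). rewrite Eq, EW. lra.
    + assert (Hlt : fst W < fst q) by (specialize (Ml q Hq); lra).
      assert (In q L1) by (apply filter_In; split; auto; unfold right_of; destruct (Rlt_dec _ _); auto; lra).
      specialize (Mw q H). simpl in Mw.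
      replace (snd q - snd W) with ((snd q - snd W) / (fst q - fst W) * (fst q - fst W)) by (field; lra).
      apply Rmult_le_compat_r; lra.
  - exists W, 0. split; auto. split; auto.
    intros q Hq. destruct (Req_EM_T (fst q) (fst vl)) as [Eq|Nq].
    + assert (In q L0) by (apply filter_In; split; auto; destruct (Req_EM_T (fst q) (fst vl)); auto; lra).
      specialize (MW q H). rewrite Eq, EW. lra.
    + exfalso. apply Hno. exists q. split; auto. specialize (Ml q Hq). lra.
Qed.

Theorem proposition2 :
  exists C : R, 0 < C /\
    forall (h : nat) (V : list pt) (Q : nat -> rect),
      valid_domain V h Q ->
      Rbar_le (rho (pdomain V h Q)) (Finite C).
Proof.
  exists 7. split; [lra|]. intros h V Q Hv.
  pose proof Hv as [[p0 Hp0] [Hok [Hin Hdisj]]].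
  assert (HV : V <> []) by (apply (hull_nonempty V p0); apply pint_in; auto).
  destruct (list_max fst V HV) as [vr [Hvr Mr]].
  destruct (list_max (fun v => - fst v) V HV) as [vl [Hvl Ml]].
  destruct (list_max snd V HV) as [vt [Hvt Mt]].
  destruct (list_max (fun v => - snd v) V HV) as [vb [Hvb Mb]].
  simpl in Ml, Mb.
  assert (Hbox : forall z, in_hull V z -> fst vl <= fst z <= fst vr /\ snd vb <= snd z <= snd vt).
  { intros z Hz.
    pose proof (hull_lin (-1) 0 (- fst vl) V z) as H1.
    pose proof (hull_lin 1 0 (fst vr) V z) as H2.
    pose proof (hull_lin 0 (-1) (- snd vb) V z) as H3.
    pose proof (hull_lin 0 1 (snd vt) V z) as H4.
    assert (-1 * fst z + 0 * snd z <= - fst vl) by (apply H1; auto; intros v Hv'; specialize (Ml v Hv'); lra).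
    assert (1 * fst z + 0 * snd z <= fst vr) by (apply H2; auto; intros v Hv'; specialize (Mr v Hv'); lra).
    assert (0 * fst z + -1 * snd z <= - snd vb) by (apply H3; auto; intros v Hv'; specialize (Mb v Hv'); lra).
    assert (0 * fst z + 1 * snd z <= snd vt) by (apply H4; auto; intros v Hv'; specialize (Mt v Hv'); lra).
    lra. }
  set (P := pdomain V h Q).
  assert (Hnoint : forall z i, (i < h)%nat -> in_rect_int (Q i) z ->
     fst vl < fst z < fst vr /\ snd vb < snd z < snd vt).
  { intros z i Hi Hz. pose proof (rect_pint V h Q i z Hv Hi (int_rect _ _ Hz)) as Hp.
    destruct (pint_shift _ _ Hp) as [e [He [A1 [A2 [A3 A4]]]]].
    apply Hbox in A1. apply Hbox in A2. apply Hbox in A3. apply Hbox in A4. simpl in *. lra. }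
  assert (Hext : forall v, In v V -> (fst v = fst vl \/ fst v = fst vr \/ snd v = snd vb \/ snd v = snd vt) -> P v).
  { intros v Hv' Hor. split; [apply in_V_hull; auto|]. intros i Hi Hint.
    specialize (Hnoint v i Hi Hint). lra. }
  assert (Pvl : P vl) by (apply Hext; auto).
  assert (Pvr : P vr) by (apply Hext; auto).
  assert (Pvb : P vb) by (apply Hext; auto).
  assert (Pvt : P vt) by (apply Hext; auto).
  assert (Wpos : fst vl < fst vr).
  { destruct (pint_shift _ _ Hp0) as [e [He [A1 [A2 _]]]].
    apply Hbox in A1. apply Hbox in A2. simpl in *. lra. }
  assert (Ml' : forall v, In v V -> fst vl <= fst v) by (intros v Hv'; specialize (Ml v Hv'); lra).
  destruct (left_support V vl Hvl Ml') as [W [m0 [HW [EW HsW]]]].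
  assert (HY : forall v, In v V -> snd v <= snd vt) by auto.
  assert (Hend := to_end V h Q (fst vl) (fst vr) (snd vb) (snd vt) W m0 Hv Hbox HY
     (ex_intro _ vr (conj Hvr eq_refl)) (in_V_hull V W HW) EW HsW).
  fold P in Hend.
  set (Wd := fst vr - fst vl). set (Hh := snd vt - snd vb).
  assert (Hgeod : forall s t, P s -> P t -> exists l, chain_in P s l t /\ chain_len s l t <= 2 * Wd + 5 * Hh).
  { intros s t Hs Ht.
    destruct (Hend s Hs) as [ls [es [Cs [Hes [Ees Ls]]]]].
    destruct (Hend t Ht) as [lt [et [Ct [Het [Eet Lt]]]]].
    destruct (chain_rev _ _ _ _ Ct) as [lt' [Ct' Lt']].
    assert (Cm : chain_in P es [] et).
    { simpl. apply seg_P; auto. intros l Hl i Hi Hint.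
      specialize (Hnoint _ i Hi Hint). simpl in Hnoint. rewrite Ees, Eet in Hnoint. lra. }
    destruct (chain_app _ _ _ _ _ _ Cm Ct') as [C1 L1].
    destruct (chain_app _ _ _ _ _ _ Cs C1) as [C2 L2].
    eexists. split; [exact C2|]. rewrite L2, L1, Lt'. simpl.
    assert (Dm : dist es et <= 0 + Hh).
    { pose proof (Hbox es Hes). pose proof (Hbox et Het).
      apply dist_bound; apply Rabs_le; unfold Hh; lra. }
    unfold Wd, Hh in *. lra. }
  unfold rho, diam_2, diam_g. fold P.
  set (E2 := fun L => exists s t, P s /\ P t /\ L = dist s t).
  destruct (Lub_Rbar_correct E2) as [Hub2 Hl2].
  assert (U2 : Rbar_le (Lub_Rbar E2) (Finite (Wd + Hh))).
  { apply Hl2. intros x [s [t [Hs [Ht ->]]]]. simpl.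
    pose proof (Hbox s (proj1 Hs)). pose proof (Hbox t (proj1 Ht)).
    apply dist_bound; apply Rabs_le; unfold Wd, Hh; lra. }
  assert (D1 : Rbar_le (Finite (dist vl vr)) (Lub_Rbar E2)) by (apply Hub2; exists vl, vr; auto).
  assert (D2 : Rbar_le (Finite (dist vb vt)) (Lub_Rbar E2)) by (apply Hub2; exists vb, vt; auto).
  assert (Wd_le : Wd <= dist vl vr).
  { pose proof (dist_ge_x vl vr). rewrite Rabs_minus_sym, Rabs_right in H; unfold Wd; lra. }
  assert (Hh_le : Hh <= dist vb vt).
  { pose proof (dist_ge_y vb vt). rewrite Rabs_minus_sym, Rabs_right in H; unfold Hh;
    [lra | pose proof (Hbox vb (in_V_hull V vb Hvb)); pose proof (Hbox vt (in_V_hull V vt Hvt)); lra]. }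
  destruct (Lub_Rbar E2) as [d| |]; simpl in U2, D1, D2; try contradiction.
  set (E3 := fun L : Rbar => exists s t, P s /\ P t /\ L = geod P s t).
  unfold Rbar_lub. destruct (Rbar_ex_lub E3) as [g [Hub3 Hl3]]. simpl.
  assert (U3 : Rbar_le g (Finite (7 * d))).
  { apply Hl3. intros x [s [t [Hs [Ht ->]]]].
    destruct (Hgeod s t Hs Ht) as [l [Cl Ll]].
    apply Rbar_le_trans with (chain_len s l t); [apply geod_le; auto|].
    simpl. unfold Wd, Hh in *. lra. }
  assert (L3 : Rbar_le (Finite 0) g).
  { apply Rbar_le_trans with (geod P vl vl); [apply geod_ge0|]. apply Hub3. exists vl, vl; auto. }
  destruct g as [g| |]; simpl in U3, L3; try contradiction.
  simpl. assert (0 < d) by (unfold Wd in *; lra).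
  apply Rmult_le_reg_r with d; [lra|].
  replace (g * / d * d) with g by (field; lra). lra.
Qed.
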